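(* Fix $m\ge 3$ and $a=(a_1,\dots,a_m),\,b=(b_1,\dots,b_m)\in S_m$. (i) Suppose there is a number $c_0=c_0(a,b)$ such that $$\widetilde\Omega^{a_1}_{i_1i_2}\widetilde\Omega^{a_2}_{i_2i_3}\cdots\widetilde\Omega^{a_m}_{i_mi_1}=e^{c_0\rho}\,\widetilde\Omega^{b_1}_{i_1i_2}\widetilde\Omega^{b_2}_{i_2i_3}\cdots\widetilde\Omega^{b_m}_{i_mi_1}\qquad(\ast)$$ for all distinct $i_1,\dots,i_m\in\{1,\dots,n\}$. Then $g_{n,m}(a)/g_{n,m}(b)=e^{c_0\rho}$. (ii) If $m$ is odd, there is no pair $(a,b)\in S_m\times S_m$ and number $c_0>0$ such that $(\ast)$ holds identically, i.e. for all distinct indices and all values of the parameters $\rho,\gamma,\alpha_1,\beta_1,\dots,\alpha_n,\beta_n$. (iii) If $m$ is even, let $N=m/2$ and let $x_1,y_1,\dots,x_N,y_N\in\{0,1\}$ satisfy $c_0:=(x_1+\dots+x_N)-(y_1+\dots+y_N)>0$. Put $$a=(1x_1,\;y_10,\;1x_2,\;y_20,\;\dots,\;1x_N,\;y_N0),\qquad b=(0x_1,\;y_11,\;0x_2,\;y_21,\;\dots,\;0x_N,\;y_N1),$$ where e.g. ''$1x_1$'' denotes the edge code whose first digit is $1$ and second digit is $x_1$. Then $(\ast)$ holds identically with this $c_0$, so that $G_{n,m}(a)=\sum_{i_1,\dots,i_m\,(\mathrm{dist})}A^{1x_1}_{i_1i_2}A^{y_10}_{i_2i_3}\cdots A^{1x_N}_{i_{m-1}i_m}A^{y_N0}_{i_mi_1}$,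 $G_{n,m}(b)=\sum_{i_1,\dots,i_m\,(\mathrm{dist})}A^{0x_1}_{i_1i_2}A^{y_11}_{i_2i_3}\cdots A^{0x_N}_{i_{m-1}i_m}A^{y_N1}_{i_mi_1}$, and $g_{n,m}(a)/g_{n,m}(b)=e^{c_0\rho}$. (iv) Conversely, for any pair $(a',b')\in S_m\times S_m$ for which $(\ast)$ holds identically with some $c_0>0$, there is a pair $(a,b)$ as in (iii) such that the generalized $m$-cycle of Type-$a'$ is isomorphic to that of Type-$a$ and the generalized $m$-cycle of Type-$b'$ is isomorphic to that of Type-$b$.
   Context: The $p_1$ model: a directed network on nodes $\{1,\dots,n\}$ has adjacency matrix $A\in\{0,1\}^{n\times n}$ with $A_{ii}=0$ ($A_{ij}=1$ iff there is a directed edge $i\to j$). The pairs $(A_{ij},A_{ji})$, $1\le i<j\le n$, are independent, and for real parameters $\rho,\gamma,\alpha_1,\beta_1,\dots,\alpha_n,\beta_n$ with $\sum_i\alpha_i=\sum_i\beta_i=0$, for $a,b\in\{0,1\}$ and $i\ne j$, $\mathbb P(A_{ij}=a,A_{ji}=b)=K_{ij}\exp\big(a(\gamma+\alpha_i+\beta_j)+b(\gamma+\alpha_j+\beta_i)+ab\rho\big)$, with $K_{ij}=[1+e^{\gamma+\alpha_i+\beta_j}+e^{\gamma+\alpha_j+\beta_i}+e^{2\gamma+\alpha_i+\beta_j+\alpha_j+\beta_i+\rho}]^{-1}$. Let $\mu_i=e^{\gamma/2+\alpha_i}$, $\nu_i=e^{\gamma/2+\beta_i}$, $\eta_i=\mu_i\nu_i$.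 Edge codes: for $i\ne j$ the edge type between $i$ and $j$ (read from $i$ to $j$) is one of $00$ (no edge), $10$ (edge $i\to j$ only), $01$ (edge $j\to i$ only), $11$ (double edge). Let $\tilde J_n$ be the all-ones $n\times n$ matrix minus the identity and $\circ$ the entrywise product; $A^{11}=A\circ A'$, $A^{00}=(\tilde J_n-A)\circ(\tilde J_n-A')$, $A^{10}=A\circ(\tilde J_n-A')$, $A^{01}=(A^{10})'$. For $i\ne j$ set $\widetilde\Omega^{00}_{ij}=1$, $\widetilde\Omega^{10}_{ij}=\mu_i\nu_j$, $\widetilde\Omega^{01}_{ij}=\mu_j\nu_i$, $\widetilde\Omega^{11}_{ij}=e^\rho\eta_i\eta_j$, and $\Omega^c_{ij}=K_{ij}\widetilde\Omega^c_{ij}$ for $c\in\{00,10,01,11\}$ (so $\Omega^c_{ij}=\mathbb P(A^c_{ij}=1)$). $S_m$ is the set of $a=(a_1,\dots,a_m)$ with each $a_k\in\{00,10,01,11\}$. A generalized $m$-cycle of Type-$a$ consists of $m$ distinct nodes $i_1,\dots,i_m$ such that the edge type between $i_k$ and $i_{k+1}$ (with $i_{m+1}=i_1$), read from $i_k$ to $i_{k+1}$, is $a_k$; two such cycles are isomorphic if the corresponding directed graphs on $m$ vertices are isomorphic. Define $G_{n,m}(a)=\sum_{i_1,\dots,i_m\,(\mathrm{dist})}A^{a_1}_{i_1i_2}A^{a_2}_{i_2i_3}\cdots A^{a_m}_{i_mi_1}$ (sum over distinct indices) and $g_{n,m}(a)=\mathbb E[G_{n,m}(a)]=\sum_{i_1,\dots,i_m\,(\mathrm{dist})}\Omega^{a_1}_{i_1i_2}\cdots\Omega^{a_m}_{i_mi_1}$.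 *)

(* Defs.v *)
From mathcomp Require Import all_boot all_order all_algebra.
From mathcomp Require Import all_classical all_reals all_analysis.
Set Implicit Arguments. Unset Strict Implicit. Unset Printing Implicit Defensive.
Import Order.TTheory GRing.Theory Num.Theory.
Local Open Scope ring_scope.

(* Edge ecode between i and j read from i to j: (d1, d2) with
   d1 = [A_ij = 1], d2 = [A_ji = 1].  So 00 = (false,false), 10 = (true,false),
   01 = (false,true), 11 = (true,true). *)
Definition ecode := (bool * bool)%type.

Section P1.
Variable R : realType.
Variable n : nat.
Variables (rho gamma : R) (alpha beta : 'I_n -> R).

Definition mu (i : 'I_n) : R := expR (gamma / 2 + alpha i).
Definition nu (i : 'I_n) : R := expR (gamma / 2 + beta i).
Definition eta (i : 'I_n) : R := mu i * nu i.

Definition Omt (c : ecode) (i j : 'I_n) : R :=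
  match c with
  | (false, false) => 1
  | (true, false) => mu i * nu j
  | (false, true) => mu j * nu i
  | (true, true) => expR rho * eta i * eta j
  end.

Definition Kp (i j : 'I_n) : R :=
  (1 + expR (gamma + alpha i + beta j) + expR (gamma + alpha j + beta i)
     + expR (2 * gamma + alpha i + beta j + alpha j + beta i + rho))^-1.

Definition Om (c : ecode) (i j : 'I_n) : R := Kp i j * Omt c i j.

End P1.

(* product along the cycle i_1 -> i_2 -> ... -> i_m -> i_1, where the
   indices are f 0, ..., f (m-1) and ordS is the cyclic successor in 'I_m *)
Definition cprod (R : realType) (n m : nat) (F : ecode -> 'I_n -> 'I_n -> R)
  (a : 'I_m -> ecode) (f : 'I_m -> 'I_n) : R :=
  \prod_(k < m) F (a k) (f k) (f (ordS k)).

Definition gnm (R : realType) (n m : nat) (rho gamma : R) (alpha beta : 'I_n -> R)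
  (a : 'I_m -> ecode) : R :=
  \sum_(f : {ffun 'I_m -> 'I_n} | injectiveb f)
     cprod (Om rho gamma alpha beta) a f.

Definition star_holds (R : realType) (n m : nat) (rho gamma : R)
  (alpha beta : 'I_n -> R) (a b : 'I_m -> ecode) (c0 : R) : Prop :=
  forall f : 'I_m -> 'I_n, injective f ->
    cprod (Omt rho gamma alpha beta) a f
    = expR (c0 * rho) * cprod (Omt rho gamma alpha beta) b f.

Definition identically (R : realType) (n m : nat) (a b : 'I_m -> ecode) (c0 : R)
  : Prop :=
  forall (rho gamma : R) (alpha beta : 'I_n -> R),
    \sum_i alpha i = 0 -> \sum_i beta i = 0 ->
    star_holds rho gamma alpha beta a b c0.

(* directed graph on the m cycle vertices of a generalized m-cycle of Type-a:
   u -> v is an edge iff (v = u+1 and first digit of a_u is 1) or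
   (u = v+1 and second digit of a_v is 1) *)
Definition cycle_rel (m : nat) (a : 'I_m -> ecode) (u v : 'I_m) : bool :=
  ((v == ordS u) && (a u).1) || ((u == ordS v) && (a v).2).

Definition cycle_iso (m1 m2 : nat) (a : 'I_m1 -> ecode) (b : 'I_m2 -> ecode) : Prop :=
  exists p : 'I_m1 -> 'I_m2, bijective p /\
    forall u v, cycle_rel a u v = cycle_rel b (p u) (p v).

Definition a_iii (N : nat) (x y : N.-tuple bool) : 'I_(N.*2) -> ecode :=
  fun k => if odd k then (nth false y k./2, false) else (true, nth false x k./2).
Definition b_iii (N : nat) (x y : N.-tuple bool) : 'I_(N.*2) -> ecode :=
  fun k => if odd k then (nth false y k./2, true) else (false, nth false x k./2).
Definition c0_iii (R : realType) (N : nat) (x y : N.-tuple bool) : R :=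
  (count id x)%:R - (count id y)%:R.

(* Main.v *)
Require Import Defs.
From mathcomp Require Import all_boot all_order all_algebra.
From mathcomp Require Import all_classical all_reals all_analysis.
From mathcomp Require Import zify ring.
Import Order.TTheory GRing.Theory Num.Theory.
Set Implicit Arguments. Unset Strict Implicit. Unset Printing Implicit Defensive.

Definition sw (c : ecode) : ecode := (c.2, c.1).
Definition both (c : ecode) : nat := c.1 && c.2.
Definition Dc m (a : 'I_m -> ecode) : nat := (\sum_(k < m) both (a k))%N.
Definition rel (ca cb ca' cb' : ecode) : bool :=
  (ca'.1 + ca.2 == cb'.1 + cb.2)%N && (ca'.2 + ca.1 == cb'.2 + cb.1)%N.
Definition inv (e : bool) (ca cb : ecode) : bool :=
  if e then [&& ca.1, ~~ cb.1 & ca.2 == cb.2] else [&& ~~ ca.2, cb.2 & ca.1 == cb.1].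
Definition tym10 (ca cb : ecode) : bool := [&& ~~ ca.1, cb.1 & ca.2 == cb.2].
Definition ty01 (ca cb : ecode) : bool := [&& ca.2, ~~ cb.2 & ca.1 == cb.1].
Definition fixc (ca cb : ecode) : bool := (ca.1 + ca.2 == cb.1 + cb.2)%N.
Definition altc (ca cb : ecode) : bool :=
  ((ca == (true,true)) && (cb == (false,false))) || ((ca == (false,false)) && (cb == (true,true))).

Lemma inv_step e ca cb ca' cb' : inv e ca cb -> rel ca cb ca' cb' -> inv (~~ e) ca' cb'.
Proof. by move: e ca cb ca' cb' => [] [[] []] [[] []] [[] []] [[] []]. Qed.
Lemma inv_tf ca cb : inv true ca cb -> inv false ca cb -> False.
Proof. by move: ca cb => [[] []] [[] []]. Qed.
Lemma classes ca cb : [|| inv true ca cb, inv false ca cb, tym10 ca cb, ty01 ca cb, fixc ca cb | altc ca cb].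
Proof. by move: ca cb => [[] []] [[] []]. Qed.
Lemma back01 ca cb ca' cb' : rel ca cb ca' cb' -> ty01 ca' cb' -> tym10 ca cb.
Proof. by move: ca cb ca' cb' => [[] []] [[] []] [[] []] [[] []]. Qed.
Lemma backm10 ca cb ca' cb' : rel ca cb ca' cb' -> tym10 ca' cb' -> ty01 ca cb.
Proof. by move: ca cb ca' cb' => [[] []] [[] []] [[] []] [[] []]. Qed.
Lemma sw01 ca cb : ty01 ca cb -> inv true (sw ca) (sw cb).
Proof. by move: ca cb => [[] []] [[] []]. Qed.
Lemma swm10 ca cb : tym10 ca cb -> inv false (sw ca) (sw cb).
Proof. by move: ca cb => [[] []] [[] []]. Qed.
Lemma fix_step ca cb ca' cb' : fixc ca cb -> rel ca cb ca' cb' -> fixc ca' cb'.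
Proof. by move: ca cb ca' cb' => [[] []] [[] []] [[] []] [[] []]. Qed.
Lemma fix_both ca cb : fixc ca cb -> both ca = both cb.
Proof. by move: ca cb => [[] []] [[] []]. Qed.
Lemma alt_step ca cb ca' cb' : altc ca cb -> rel ca cb ca' cb' -> altc ca' cb'.
Proof. by move: ca cb ca' cb' => [[] []] [[] []] [[] []] [[] []]. Qed.
Lemma alt_both ca cb ca' cb' : altc ca cb -> rel ca cb ca' cb' -> both ca' = both cb.
Proof. by move: ca cb ca' cb' => [[] []] [[] []] [[] []] [[] []]. Qed.
Lemma rel_sw ca cb ca' cb' : rel ca cb ca' cb' -> rel (sw ca') (sw cb') (sw ca) (sw cb).
Proof. by move: ca cb ca' cb' => [[] []] [[] []] [[] []] [[] []]. Qed.
Lemma both_sw c : both (sw c) = both c.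
Proof. by case: c => [[] []]. Qed.

Lemma ordS_rev m (w : 'I_m) : ordS (rev_ord (ordS w)) = rev_ord w.
Proof.
apply: val_inj => /=; case: w => w Hw /=.
case: (ltnP w.+1 m) => H.
  rewrite (modn_small H) (_ : (m - w.+2).+1 = m - w.+1); last by lia.
  by rewrite modn_small //; lia.
have -> : w.+1 = m by lia.
by rewrite modnn (_ : (m - 1).+1 = m) ?modnn ?subnn //; lia.
Qed.

Definition ix m (Hm : (0 < m)%N) (j : nat) : 'I_m := Ordinal (@ltn_pmod j m Hm).
Lemma ixS m (Hm : (0 < m)%N) j : ix Hm j.+1 = ordS (ix Hm j).
Proof. apply: val_inj => /=. by rewrite -[(j %% m).+1]addn1 modnDml addn1. Qed.
Lemma ix_val m (Hm : (0 < m)%N) (k : 'I_m) : ix Hm k = k.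
Proof. by apply: val_inj => /=; rewrite modn_small. Qed.
Lemma ixm m (Hm : (0 < m)%N) : ix Hm m = ix Hm 0.
Proof. by apply: val_inj => /=; rewrite modnn mod0n. Qed.

Lemma inv_all m (Hm : (0 < m)%N) (a b : 'I_m -> ecode) (I : ecode -> ecode -> bool) :
  (forall ca cb ca' cb', I ca cb -> rel ca cb ca' cb' -> I ca' cb') ->
  (forall k, rel (a k) (b k) (a (ordS k)) (b (ordS k))) ->
  I (a (ix Hm 0)) (b (ix Hm 0)) -> forall k, I (a k) (b k).
Proof.
move=> Hs HR H0 k; rewrite -(ix_val Hm k); elim: (val k) => // j IH.
by rewrite ixS; apply: Hs IH (HR _).
Qed.

Lemma ciso_trans m1 m2 m3 (a : 'I_m1 -> ecode) (b : 'I_m2 -> ecode) (c : 'I_m3 -> ecode) :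
  cycle_iso a b -> cycle_iso b c -> cycle_iso a c.
Proof.
move=> [p [bp Hp]] [q [bq Hq]]; exists (q \o p); split; first exact: bij_comp.
by move=> u v; rewrite Hp Hq.
Qed.
Lemma ciso_ext m (a b : 'I_m -> ecode) : a =1 b -> cycle_iso a b.
Proof.
move=> E; exists id; split; first exact: (Bijective (g:=id)).
by move=> u v; rewrite /cycle_rel !E.
Qed.
Lemma ciso_rot m (a : 'I_m -> ecode) : cycle_iso a (fun k => a (ordS k)).
Proof.
exists (@ord_pred m); split; first exact: ord_pred_bij.
move=> u v; rewrite /cycle_rel !ord_predK.
by rewrite -(inj_eq (@ordS_inj m) (ord_pred v)) -(inj_eq (@ordS_inj m) (ord_pred u)) !ord_predK.
Qed.
Lemma ciso_refl m (a : 'I_m -> ecode) : cycle_iso a (fun k => sw (a (rev_ord (ordS k)))).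
Proof.
exists (@rev_ord m); split; first by exists (@rev_ord m); apply: rev_ordK.
have key (u v : 'I_m) : (rev_ord v == ordS (rev_ord u)) = (u == ordS v).
  have [w ->] : exists w, u = ordS w by exists (ord_pred u); rewrite ord_predK.
  by rewrite ordS_rev (inj_eq rev_ord_inj) (inj_eq (@ordS_inj _)) eq_sym.
move=> u v; rewrite /cycle_rel !key /sw /=.
rewrite orbC; congr orb.
  by case: eqP => // ->; rewrite ordS_rev rev_ordK.
by case: eqP => // ->; rewrite ordS_rev rev_ordK.
Qed.

Lemma tup_size (G : nat -> bool) N : size [seq G i | i <- iota 0 N] == N.
Proof. by rewrite size_map size_iota. Qed.
Definition tup (G : nat -> bool) N : N.-tuple bool := @Tuple N bool _ (tup_size G N).
Lemma nth_tup G N i : (i < N)%N -> nth false (tup G N) i = G i.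
Proof. by move=> H; rewrite /= (nth_map 0) ?size_iota // nth_iota. Qed.
Lemma count_tup G N : count id (tup G N) = (\sum_(i < N) G i)%N.
Proof.
rewrite /=; elim: N => [|N IH]; first by rewrite big_ord0.
rewrite (_ : iota 0 N.+1 = iota 0 N ++ [:: N]); last by rewrite -addn1 iotaD.
by rewrite big_ord_recr -IH map_cat count_cat /= addn0.
Qed.
Lemma pair_sum N (F : nat -> nat) :
  (\sum_(k < N.*2) F k = \sum_(i < N) (F i.*2 + F i.*2.+1))%N.
Proof.
elim: N => [|N IH]; first by rewrite !big_ord0.
by rewrite doubleS !big_ord_recr /= IH addnA.
Qed.

Definition Concl m (a b : 'I_m -> ecode) := exists N (x y : N.-tuple bool),
  [/\ m = N.*2, (count id y < count id x)%N, cycle_iso a (a_iii x y) & cycle_iso b (b_iii x y)].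

Lemma pattl N (Hm : (0 < N.*2)%N) (a b : 'I_(N.*2) -> ecode) :
  (forall k : 'I_(N.*2), inv (~~ odd k) (a k) (b k)) -> (Dc b < Dc a)%N -> Concl a b.
Proof.
move=> Hk HD.
pose A j := a (ix Hm j); pose B j := b (ix Hm j).
have HA j : inv (~~ odd j) (A j) (B j).
  by have := Hk (ix Hm j); rewrite /= odd_mod ?odd_double.
pose x := tup (fun i => (A i.*2).2) N; pose y := tup (fun i => (A i.*2.+1).1) N.
have Ea k : a k = A k by rewrite /A ix_val.
have Eb k : b k = B k by rewrite /B ix_val.
have DA : Dc a = count id x.
  rewrite count_tup /Dc (eq_bigr (fun k : 'I_ _ => both (A k))) => [|k _]; last by rewrite Ea.
  rewrite (pair_sum N (fun j => both (A j))); apply: eq_bigr => i _.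
  move: (HA i.*2) (HA i.*2.+1); rewrite /= odd_double /=.
  by case: (A i.*2) (B i.*2) (A i.*2.+1) (B i.*2.+1) => [[] []] [[] []] [[] []] [[] []].
have DB : Dc b = count id y.
  rewrite count_tup /Dc (eq_bigr (fun k : 'I_ _ => both (B k))) => [|k _]; last by rewrite Eb.
  rewrite (pair_sum N (fun j => both (B j))); apply: eq_bigr => i _.
  move: (HA i.*2) (HA i.*2.+1); rewrite /= odd_double /=.
  by case: (A i.*2) (B i.*2) (A i.*2.+1) (B i.*2.+1) => [[] []] [[] []] [[] []] [[] []].
exists N, x, y; split => //; first by rewrite -DA -DB.
  apply: ciso_ext => k; rewrite /a_iii.
  have hk : (k./2 < N)%N.
    by rewrite -ltn_double; move: (odd_double_half k) (ltn_ord k); lia.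
  have := Hk k; case: ifP => Ho /=.
    rewrite nth_tup // (_ : (k./2).*2.+1 = k); last by move: (odd_double_half k); rewrite Ho /=; lia.
    rewrite -Ea; by case: (a k) (b k) => [[] []] [[] []].
  rewrite nth_tup // (_ : (k./2).*2 = k); last by move: (odd_double_half k); rewrite Ho /=; lia.
  rewrite -Ea; by case: (a k) (b k) => [[] []] [[] []].
apply: ciso_ext => k; rewrite /b_iii.
have hk : (k./2 < N)%N.
  by rewrite -ltn_double; move: (odd_double_half k) (ltn_ord k); lia.
have := Hk k; case: ifP => Ho /=.
  rewrite nth_tup // (_ : (k./2).*2.+1 = k); last by move: (odd_double_half k); rewrite Ho /=; lia.
  rewrite -Ea; by case: (a k) (b k) => [[] []] [[] []].
rewrite nth_tup // (_ : (k./2).*2 = k); last by move: (odd_double_half k); rewrite Ho /=; lia.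
rewrite -Ea; by case: (a k) (b k) => [[] []] [[] []].
Qed.

Definition HRel m (a b : 'I_m -> ecode) :=
  forall k, rel (a k) (b k) (a (ordS k)) (b (ordS k)).

Lemma direct m (Hm : (0 < m)%N) (a b : 'I_m -> ecode) :
  HRel a b -> (Dc b < Dc a)%N -> inv true (a (ix Hm 0)) (b (ix Hm 0)) -> Concl a b.
Proof.
move=> HR HD H0.
have HI j : inv (~~ odd j) (a (ix Hm j)) (b (ix Hm j)).
  elim: j => [|j IH] //; rewrite ixS /=; exact: inv_step IH (HR _).
have Hev : ~~ odd m.
  apply/negP => Ho; have := HI m; rewrite ixm Ho /= => H1; exact: inv_tf H0 H1.
have Hk (k : 'I_m) : inv (~~ odd k) (a k) (b k) by have := HI k; rewrite ix_val.
have [N HN] : exists N, m = N.*2.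
  by exists m./2; move: (odd_double_half m); rewrite (negbTE Hev).
clear HI H0 HR; subst m; exact: (pattl Hm Hk HD).
Qed.

Lemma concl_trans m (a b a' b' : 'I_m -> ecode) :
  Concl a' b' -> cycle_iso a a' -> cycle_iso b b' -> Concl a b.
Proof.
move=> [N [x [y [E C Ha Hb]]]] H1 H2; exists N, x, y; split => //; [exact: ciso_trans H1 Ha | exact: ciso_trans H2 Hb].
Qed.

Lemma phi_inj m : injective (fun k : 'I_m => rev_ord (ordS k)).
Proof. by move=> u v /rev_ord_inj; apply: ordS_inj. Qed.

Lemma Dc_rot m (a : 'I_m -> ecode) : Dc (fun k => a (ordS k)) = Dc a.
Proof. by rewrite /Dc [RHS](reindex_inj (@ordS_inj m)). Qed.
Lemma Dc_refl m (a : 'I_m -> ecode) : Dc (fun k => sw (a (rev_ord (ordS k)))) = Dc a.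
Proof.
rewrite /Dc [RHS](reindex_inj (@phi_inj m)); apply: eq_bigr => k _; exact: both_sw.
Qed.
Lemma HR_rot m (a b : 'I_m -> ecode) : HRel a b -> HRel (fun k => a (ordS k)) (fun k => b (ordS k)).
Proof. by move=> HR k; apply: HR. Qed.
Lemma HR_refl m (a b : 'I_m -> ecode) : HRel a b ->
  HRel (fun k => sw (a (rev_ord (ordS k)))) (fun k => sw (b (rev_ord (ordS k)))).
Proof.
move=> HR k /=; rewrite -(ordS_rev (ordS k)); exact: rel_sw (HR _).
Qed.

Lemma core0 m (Hm : (0 < m)%N) (a b : 'I_m -> ecode) :
  HRel a b -> (Dc b < Dc a)%N ->
  inv true (a (ix Hm 0)) (b (ix Hm 0)) || inv false (a (ix Hm 0)) (b (ix Hm 0)) -> Concl a b.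
Proof.
move=> HR HD /orP [H|H]; first exact: direct H.
apply: (@concl_trans _ _ _ (fun k => a (ordS k)) (fun k => b (ordS k)));
  [|exact: ciso_rot|exact: ciso_rot].
apply: (@direct m Hm (fun k => a (ordS k)) (fun k => b (ordS k))); first exact: HR_rot.
  by rewrite !Dc_rot.
exact: inv_step H (HR _).
Qed.

Lemma core m (Hm : (0 < m)%N) (a b : 'I_m -> ecode) :
  HRel a b -> (Dc b < Dc a)%N -> Concl a b.
Proof.
move=> HR HD; set z := ix Hm 0.
pose w := rev_ord (ordS z).
have Hw : ordS (ordS w) = z.
  rewrite /w ordS_rev; apply: val_inj => /=; rewrite mod0n (_ : (m - 1).+1 = m) ?modnn //; lia.
have refl : inv true (sw (a w)) (sw (b w)) || inv false (sw (a w)) (sw (b w)) -> Concl a b.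
  move=> H.
  apply: (@concl_trans _ _ _ (fun k => sw (a (rev_ord (ordS k)))) (fun k => sw (b (rev_ord (ordS k)))));
    [|exact: ciso_refl|exact: ciso_refl].
  apply: (@core0 m Hm (fun k => sw (a (rev_ord (ordS k)))) (fun k => sw (b (rev_ord (ordS k))))); [exact: HR_refl| by rewrite !Dc_refl| exact: H].
have := classes (a z) (b z).
case/orP => [H|]; first by apply: core0 => //; rewrite H.
case/orP => [H|]; first by apply: core0 => //; rewrite H orbT.
case/orP => [H|].
  apply: refl; apply/orP; right; apply: swm10.
  apply: (back01 (HR w)); apply: (backm10 (HR (ordS w))); by rewrite Hw.
case/orP => [H|].
  apply: refl; apply/orP; left; apply: sw01.
  apply: (backm10 (HR w)); apply: (back01 (HR (ordS w))); by rewrite Hw.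
case/orP => [H|H].
  have Hf := inv_all fix_step HR H.
  suff : Dc a = Dc b by move=> E; rewrite E ltnn in HD.
  by apply: eq_bigr => k _; apply: fix_both.
have Ha := inv_all alt_step HR H.
suff : Dc a = Dc b by move=> E; rewrite E ltnn in HD.
rewrite /Dc [LHS](reindex_inj (@ordS_inj m)); apply: eq_bigr => k _; exact: alt_both (Ha k) (HR k).
Qed.

Local Open Scope ring_scope.

Definition Out m (a : 'I_m -> ecode) (k : 'I_m) : nat := ((a (ordS k)).1 + (a k).2)%N.
Definition In m (a : 'I_m -> ecode) (k : 'I_m) : nat := ((a (ordS k)).2 + (a k).1)%N.

Section An.
Variable R : realType.

Lemma Omt_exp n (rho gamma : R) (alpha beta : 'I_n -> R) (c : ecode) (i j : 'I_n) :
  Omt rho gamma alpha beta c i j =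
  expR (rho * (both c)%:R + (c.1 : nat)%:R * ((gamma/2 + alpha i) + (gamma/2 + beta j))
        + (c.2 : nat)%:R * ((gamma/2 + alpha j) + (gamma/2 + beta i))).
Proof.
case: c => [[] []]; rewrite /Omt /eta /mu /nu /both /= ?mul1r ?mul0r ?mulr1 ?mulr0 ?addr0 ?add0r.
- by rewrite !expRD; ring.
- by rewrite !expRD; ring.
- by rewrite !expRD; ring.
- by rewrite expR0.
Qed.

Definition Vs n m (gamma : R) (alpha beta : 'I_n -> R) (a : 'I_m -> ecode) (f : 'I_m -> 'I_n) : R :=
  \sum_(k < m) ((Out a k)%:R * (gamma/2 + alpha (f (ordS k))) + (In a k)%:R * (gamma/2 + beta (f (ordS k)))).

Lemma cprod_vertex n m (rho gamma : R) (alpha beta : 'I_n -> R) (a : 'I_m -> ecode) (f : 'I_m -> 'I_n) :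
  cprod (Omt rho gamma alpha beta) a f = expR (rho * (Dc a)%:R + Vs gamma alpha beta a f).
Proof.
rewrite /cprod; under eq_bigr do rewrite Omt_exp.
rewrite -expR_sum; congr expR.
set s := fun i => gamma / 2 + alpha i; set t := fun i => gamma / 2 + beta i.
have E1 : \sum_(k < m) ((a k).1 : nat)%:R * s (f k) = \sum_(k < m) ((a (ordS k)).1 : nat)%:R * s (f (ordS k)).
  exact: (reindex_inj (@ordS_inj m)).
have E2 : \sum_(k < m) ((a k).2 : nat)%:R * t (f k) = \sum_(k < m) ((a (ordS k)).2 : nat)%:R * t (f (ordS k)).
  exact: (reindex_inj (@ordS_inj m)).
rewrite (eq_bigr (fun k => rho * (both (a k))%:R + ((a k).1 : nat)%:R * s (f k)
   + ((a k).1 : nat)%:R * t (f (ordS k)) + ((a k).2 : nat)%:R * s (f (ordS k))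
   + ((a k).2 : nat)%:R * t (f k))); last by move=> k _; rewrite /s /t; ring.
rewrite /Vs [in RHS](eq_bigr (fun k => ((a (ordS k)).1 : nat)%:R * s (f (ordS k)) + ((a k).2 : nat)%:R * s (f (ordS k))
   + ((a (ordS k)).2 : nat)%:R * t (f (ordS k)) + ((a k).1 : nat)%:R * t (f (ordS k))));
  last by move=> k _; rewrite /Out /In !natrD /s /t; ring.
rewrite !big_split /= E1 E2 /Dc natr_sum mulr_sumr; ring.
Qed.

Lemma cprod_gt0 n m (rho gamma : R) (alpha beta : 'I_n -> R) (a : 'I_m -> ecode) (f : 'I_m -> 'I_n) :
  0 < cprod (Om rho gamma alpha beta) a f.
Proof.
apply: prodr_gt0 => k _; rewrite /Om mulr_gt0 // ?Omt_exp ?expR_gt0 //.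
by rewrite invr_gt0 !addr_gt0 // expR_gt0.
Qed.

Lemma cprod_Om n m (rho gamma : R) (alpha beta : 'I_n -> R) (a : 'I_m -> ecode) (f : 'I_m -> 'I_n) :
  cprod (Om rho gamma alpha beta) a f =
  (\prod_(k < m) Kp rho gamma alpha beta (f k) (f (ordS k))) * cprod (Omt rho gamma alpha beta) a f.
Proof. by rewrite /cprod /Om -big_split. Qed.

Lemma part_i m n (Hmn : (m <= n)%N) (rho gamma : R) (alpha beta : 'I_n -> R)
  (a b : 'I_m -> ecode) (c0 : R) :
  star_holds rho gamma alpha beta a b c0 ->
  gnm rho gamma alpha beta a / gnm rho gamma alpha beta b = expR (c0 * rho).
Proof.
move=> Hs.
have E : gnm rho gamma alpha beta a = expR (c0 * rho) * gnm rho gamma alpha beta b.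
  rewrite /gnm mulr_sumr; apply: eq_bigr => f /injectiveP Hf.
  by rewrite !cprod_Om (Hs _ Hf); ring.
pose f0 : {ffun 'I_m -> 'I_n} := [ffun k => widen_ord Hmn k].
have f0i : injectiveb f0.
  by apply/injectiveP => x y; rewrite !ffunE => /(congr1 val) /= /val_inj.
have Hpos : 0 < gnm rho gamma alpha beta b.
  rewrite /gnm (bigD1 f0) //=; apply: ltr_wpDr; first by apply: sumr_ge0 => f _; apply/ltW/cprod_gt0.
  exact: cprod_gt0.
by rewrite E mulfK // gt_eqF.
Qed.

End An.

Lemma sum_ind (R : realType) m (F : 'I_m -> R) (j : 'I_m) :
  \sum_(k < m) F k * (k == j)%:R = F j.
Proof.
rewrite (bigD1 j) //= eqxx mulr1 big1 ?addr0 // => k /negbTE ->; by rewrite mulr0.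
Qed.

Lemma sum_ind_sub (R : realType) n (Hn : (n%:R : R) != 0) (U : 'I_n) :
  \sum_(i < n) ((i == U)%:R - n%:R^-1) = 0 :> R.
Proof.
rewrite sumrB sumr_const card_ord.
rewrite (bigD1 U) //= eqxx big1 ?addr0; last by move=> i /negbTE ->.
rewrite -[_ *+ n]mulr_natr mulVf //; by rewrite subrr.
Qed.

Lemma sumOI m (a : 'I_m -> ecode) : (\sum_(k < m) Out a k = \sum_(k < m) In a k)%N.
Proof.
have E1 : (\sum_(k<m) (a (ordS k)).1 = \sum_(k<m) (a k).1)%N by rewrite [RHS](reindex_inj (@ordS_inj m)).
have E2 : (\sum_(k<m) (a (ordS k)).2 = \sum_(k<m) (a k).2)%N by rewrite [RHS](reindex_inj (@ordS_inj m)).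
by rewrite /Out /In !big_split /= E1 E2 addnC.
Qed.

Lemma degs m (Hm : (0 < m)%N) (Oa Ia Ob Ib : 'I_m -> nat) :
  (forall k0 k1, Oa k0 + Ia k1 = Ob k0 + Ib k1)%N ->
  (\sum_(k < m) Oa k = \sum_(k < m) Ia k)%N -> (\sum_(k < m) Ob k = \sum_(k < m) Ib k)%N ->
  forall k, Oa k = Ob k /\ Ia k = Ib k.
Proof.
move=> H sa sb.
have E : (\sum_(k < m) Oa k = \sum_(k < m) Ob k)%N.
  have : (\sum_(k < m) (Oa k + Ia k) = \sum_(k < m) (Ob k + Ib k))%N by apply: eq_bigr => k _; apply: H.
  rewrite !big_split /= -sa -sb.
  have h (p q : nat) : (p + p = q + q)%N -> p = q by lia.
  by move/h.
move=> k; suff HI : Ia k = Ib k by split => //; have := H k k; rewrite HI; move/eqP; rewrite eqn_add2r => /eqP.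
have : (\sum_(k0<m) (Oa k0 + Ia k) = \sum_(k0<m) (Ob k0 + Ib k))%N by apply: eq_bigr => k0 _; apply: H.
rewrite !big_split /= E !sum_nat_const card_ord => /eqP; rewrite eqn_add2l eqn_pmul2l // => /eqP.
done.
Qed.

Lemma derive (R : realType) n m (Hmn : (m <= n)%N) (Hm0 : (0 < m)%N) (a b : 'I_m -> ecode) (c0 : R) :
  0 < c0 -> identically n a b c0 -> HRel a b /\ (Dc b < Dc a)%N.
Proof.
move=> Hc Hid.
pose w (k : 'I_m) : 'I_n := widen_ord Hmn k.
have wi : injective w by move=> x y /(congr1 val) /= /val_inj.
have key (rho gamma : R) alpha beta : \sum_i alpha i = 0 -> \sum_i beta i = 0 ->
   rho * (Dc a)%:R + Vs gamma alpha beta a w = c0 * rho + (rho * (Dc b)%:R + Vs gamma alpha beta b w).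
  move=> s1 s2; have := Hid rho gamma alpha beta s1 s2 w wi; rewrite !cprod_vertex -expRD; exact: expR_inj.
have n0 : (n%:R : R) != 0 by rewrite pnatr_eq0 -lt0n; exact: leq_trans Hm0 Hmn.
have s0 : \sum_(i < n) (fun _ => 0 : R) i = 0 by rewrite big1.
split; last first.
  have := key 1 0 (fun _ => 0) (fun _ => 0) s0 s0.
  have V0 (d : 'I_m -> ecode) : Vs 0 (fun _ => 0 : R) (fun _ => 0) d w = 0.
    by rewrite /Vs big1 // => k _; rewrite mul0r addr0 !mulr0 addr0.
  rewrite !V0 !addr0 !mul1r mulr1 => E.
  by rewrite -(ltr_nat R) E ltrDr.
have deg k0 k1 : (Out a k0 + In a k1 = Out b k0 + In b k1)%N.
  pose U := w (ordS k0); pose V := w (ordS k1).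
  have := key 0 (2 * n%:R^-1) (fun i => (i == U)%:R - n%:R^-1) (fun i => (i == V)%:R - n%:R^-1)
    (sum_ind_sub n0 U) (sum_ind_sub n0 V).
  have h (z : R) : 2 * n%:R^-1 / 2 + (z - n%:R^-1) = z.
    rewrite mulrAC divff ?mul1r; first by rewrite addrC subrK.
    by rewrite pnatr_eq0.
  have Vk (d : 'I_m -> ecode) : Vs (2 * n%:R^-1) (fun i => (i == U)%:R - n%:R^-1)
      (fun i => (i == V)%:R - n%:R^-1) d w = (Out d k0 + In d k1)%:R :> R.
    rewrite /Vs (eq_bigr (fun k => (Out d k)%:R * (k == k0)%:R + (In d k)%:R * (k == k1)%:R)).
      by rewrite big_split /= !sum_ind natrD.
    by move=> k _ /=; rewrite !h /U /V !(inj_eq wi) !(inj_eq (@ordS_inj m)).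
  rewrite !Vk !mul0r !mulr0 !add0r => /eqP; rewrite eqr_nat => /eqP.
  done.
have Hd := degs Hm0 deg (sumOI a) (sumOI b).
move=> k; apply/andP; split; apply/eqP; [exact: (Hd k).1 | exact: (Hd k).2].
Qed.

Lemma oddS N (k : 'I_(N.*2)) : odd (ordS k) = ~~ odd k.
Proof.
rewrite /=; case: (ltnP k.+1 N.*2) => H; first by rewrite modn_small.
have E : k.+1 = N.*2 by apply/eqP; rewrite eqn_leq H ltn_ord.
by rewrite E modnn /=; have := congr1 odd E; rewrite odd_double /= => ->.
Qed.

Lemma count_nth_sum (s : seq bool) : count id s = (\sum_(i < size s) nth false s i)%N.
Proof.
elim: s => [|c s IH]; first by rewrite big_ord0.
rewrite /= big_ord_recl IH /=; congr addn; apply: eq_bigr => i _; by rewrite lift0.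
Qed.

Lemma Dc_iii N (x y : N.-tuple bool) :
  Dc (a_iii x y) = count id x /\ Dc (b_iii x y) = count id y.
Proof.
rewrite !count_nth_sum !size_tuple; split.
  pose Fa j := both (if odd j then (nth false y j./2, false) else (true, nth false x j./2)).
  have -> : Dc (a_iii x y) = (\sum_(k < N.*2) Fa k)%N by [].
  rewrite pair_sum; apply: eq_bigr => i _.
  by rewrite /Fa /= odd_double doubleK uphalf_double /both /= andbF addn0.
pose Fb j := both (if odd j then (nth false y j./2, true) else (false, nth false x j./2)).
have -> : Dc (b_iii x y) = (\sum_(k < N.*2) Fb k)%N by [].
rewrite pair_sum; apply: eq_bigr => i _.
by rewrite /Fb /= odd_double doubleK uphalf_double /both /= andbT.
Qed.

Lemma part_iii1 (R : realType) N (x y : N.-tuple bool) n :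
  identically n (a_iii x y) (b_iii x y) (c0_iii R x y).
Proof.
move=> rho gamma alpha beta _ _ f _.
rewrite !cprod_vertex -expRD; congr expR.
have EV : Vs gamma alpha beta (a_iii x y) f = Vs gamma alpha beta (b_iii x y) f.
  apply: eq_bigr => k _.
  have -> : Out (a_iii x y) k = Out (b_iii x y) k.
    by rewrite /Out /a_iii /b_iii oddS; case: (odd k).
  have -> : In (a_iii x y) k = In (b_iii x y) k.
    by rewrite /In /a_iii /b_iii oddS; case: (odd k).
  by [].
have [Da Db] := Dc_iii x y.
rewrite EV Da Db /c0_iii; ring.
Qed.

Unset Implicit Arguments.
Theorem lemma1 (R : realType) :
  (* (i) *)
  (forall m : nat, (3 <= m)%N ->
   forall n : nat, (m <= n)%N ->
   forall (rho gamma : R) (alpha beta : 'I_n -> R),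
     \sum_i alpha i = 0 -> \sum_i beta i = 0 ->
   forall (a b : 'I_m -> ecode) (c0 : R),
     star_holds rho gamma alpha beta a b c0 ->
     gnm rho gamma alpha beta a / gnm rho gamma alpha beta b = expR (c0 * rho))
  /\
  (* (ii) *)
  (forall m : nat, (3 <= m)%N -> odd m ->
   forall n : nat, (m <= n)%N ->
   ~ (exists (a b : 'I_m -> ecode) (c0 : R), 0 < c0 /\ identically n a b c0))
  /\
  (* (iii) *)
  (forall N : nat, (3 <= N.*2)%N ->
   forall x y : N.-tuple bool, (count id y < count id x)%N ->
     (forall n : nat, identically n (a_iii x y) (b_iii x y) (c0_iii R x y))
     /\
     (forall n : nat, (N.*2 <= n)%N ->
      forall (rho gamma : R) (alpha beta : 'I_n -> R),
        \sum_i alpha i = 0 -> \sum_i beta i = 0 ->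
        gnm rho gamma alpha beta (a_iii x y) / gnm rho gamma alpha beta (b_iii x y)
        = expR (c0_iii R x y * rho)))
  /\
  (* (iv) *)
  (forall m : nat, (3 <= m)%N ->
   forall n : nat, (m <= n)%N ->
   forall (a' b' : 'I_m -> ecode) (c0 : R), 0 < c0 -> identically n a' b' c0 ->
   exists (N : nat) (x y : N.-tuple bool),
     [/\ m = N.*2, (count id y < count id x)%N,
         cycle_iso a' (a_iii x y) & cycle_iso b' (b_iii x y)]).
Proof.
split; [|split; [|split]].
- move=> m _ n Hmn rho gamma alpha beta _ _ a b c0 Hs; exact: (@part_i R m n Hmn rho gamma alpha beta a b c0 Hs).
- move=> m H3 Hodd n Hmn [a [b [c0 [Hc Hid]]]].
  have Hm0 : (0 < m)%N by apply: leq_trans H3.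
  have [HR HD] := derive Hmn Hm0 Hc Hid.
  have [N [x [y [E _ _ _]]]] := core Hm0 HR HD.
  by rewrite E odd_double in Hodd.
- move=> N H3 x y Hxy; split; first exact: part_iii1.
  move=> n Hn rho gamma alpha beta s1 s2.
  have Hs := @part_iii1 R N x y n rho gamma alpha beta s1 s2.
  exact: (part_i Hn Hs).
- move=> m H3 n Hmn a' b' c0 Hc Hid.
  have Hm0 : (0 < m)%N by apply: leq_trans H3.
  have [HR HD] := derive Hmn Hm0 Hc Hid.
  exact: (@core m Hm0 a' b' HR HD).
Qed.
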